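(* Let $S=((x_i,y_i))_{i=1}^n$ with $y_i\in\{\pm1\}$, let $h_1,\dots,h_T:\mathcal X\to[-1,1]$, $H=\frac1T\sum_{t=1}^Th_t$, and $\kappa\in[0,1/2]$. Let $(P^\star,\theta_H)=\mathrm{Pythia}(S,H,\kappa)$. Then \[ \sum_{t=1}^TM(P^\star,h_t)\le\frac T2+\frac{T\theta_H}{2}, \] where $M(P,h)=\mathbb{E}_{i\sim P}\big[1-\tfrac12|h(x_i)-y_i|\big]$.
   Context: Pythia$(S,H,\kappa)$: let $B=\{i\in[n]:y_iH(x_i)<0\}$ and $\theta=0$; sort $[n]\setminus B$ by the margin $y_iH(x_i)$; while $|B|<\kappa n$, add to $B$ an element $i$ of $[n]\setminus B$ of minimum margin and set $\theta$ to $y_iH(x_i)$. Output $P^\star$, the uniform distribution on $B$, and $\theta_H=\theta$. *)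

(* Defs.v *)
From HB Require Import structures.
From mathcomp Require Import all_boot all_order all_algebra.
Set Implicit Arguments. Unset Strict Implicit. Unset Printing Implicit Defensive.
Import Order.TTheory GRing.Theory Num.Theory.
Local Open Scope ring_scope.

Definition avg_hyp (R : realFieldType) (X : Type) (T : nat)
  (h : 'I_T -> X -> R) : X -> R :=
  fun z => T%:R^-1 * \sum_(t < T) h t z.

Definition margin (R : realFieldType) (X : Type) (n : nat)
  (x : 'I_n -> X) (y : 'I_n -> R) (H : X -> R) (i : 'I_n) : R :=
  y i * H (x i).

(* Reachable states (B, theta) of the Pythia(S,H,kappa) loop. *)
Inductive pythia_run (R : realFieldType) (n : nat) (m : 'I_n -> R) (kappa : R)
  : {set 'I_n} -> R -> Prop :=
| pythia_init : pythia_run m kappa [set i | m i < 0] 0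
| pythia_step (B : {set 'I_n}) (theta : R) (i : 'I_n) :
    pythia_run m kappa B theta ->
    #|B|%:R < kappa * n%:R ->
    i \notin B ->
    (forall j, j \notin B -> m i <= m j) ->
    pythia_run m kappa (i |: B) (m i).

Definition pythia_output (R : realFieldType) (n : nat) (m : 'I_n -> R)
  (kappa : R) (B : {set 'I_n}) (theta : R) : Prop :=
  pythia_run m kappa B theta /\ ~ (#|B|%:R < kappa * n%:R).

Definition unif_on (R : realFieldType) (n : nat) (B : {set 'I_n}) : 'I_n -> R :=
  fun i => if i \in B then #|B|%:R^-1 else 0.

Definition Mgain (R : realFieldType) (X : Type) (n : nat)
  (x : 'I_n -> X) (y : 'I_n -> R) (P : 'I_n -> R) (h : X -> R) : R :=
  \sum_(i < n) P i * (1 - `|h (x i) - y i| / 2).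

(* Main.v *)
Require Import Defs.
From HB Require Import structures.
From mathcomp Require Import all_boot all_order all_algebra.
From mathcomp Require Import ring lra.
Import Order.TTheory GRing.Theory Num.Theory.
Local Open Scope ring_scope.

Lemma pythia_inv (R : realFieldType) (n : nat) (m : 'I_n -> R) (kappa : R)
  (B : {set 'I_n}) (th : R) : pythia_run m kappa B th ->
  (forall j, j \in B -> m j <= th) /\ (forall j, j \notin B -> th <= m j)
  /\ (B = set0 -> th = 0).
Proof.
move=> hr; induction hr as [|B0 t0 i _ [IH1 [IH2 IH3]] _ iB imin].
  split; first by move=> j; rewrite inE => /ltW.
  by split=> // j; rewrite inE -leNgt.
split.
  move=> j; rewrite in_setU1 => /orP [/eqP -> //|jB].
  exact: le_trans (IH1 _ jB) (IH2 _ iB).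
split.
  by move=> j; rewrite in_setU1 negb_or => /andP [_ jB]; apply: imin.
move=> E; have : i \in i |: B0 by rewrite setU11.
by rewrite E inE.
Qed.

Lemma gain_pt (R : realFieldType) (a b : R) : (b = 1 \/ b = -1) ->
  -1 <= a <= 1 -> 1 - `|a - b| / 2 = (1 + b * a) / 2.
Proof.
move=> [->|->] /andP [h1 h2].
  by rewrite ler0_norm; [field | lra].
by rewrite ger0_norm; [field | lra].
Qed.

Theorem mainTheorem11 (R : realFieldType) (X : Type) (n T : nat)
  (x : 'I_n -> X) (y : 'I_n -> R)
  (hy : forall i, y i = 1 \/ y i = -1)
  (h : 'I_T -> X -> R)
  (hT : (0 < T)%N)
  (hrange : forall t z, -1 <= h t z <= 1)
  (kappa : R) (hk : 0 <= kappa <= 1 / 2)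
  (B : {set 'I_n}) (thetaH : R)
  (hout : pythia_output (margin x y (avg_hyp h)) kappa B thetaH) :
  \sum_(t < T) Mgain x y (@unif_on R n B) (h t) <= T%:R / 2 + T%:R * thetaH / 2.
Proof.
case: hout => hrun _.
have [I1 [_ I3]] := @pythia_inv _ _ _ _ _ _ hrun.
set m := margin x y (avg_hyp h) in I1 I3 *.
set P := @unif_on R n B.
have TP : T%:R != 0 :> R by rewrite pnatr_eq0 -lt0n.
have step : forall i, \sum_(t < T) P i * (1 - `|h t (x i) - y i| / 2)
    = P i * (T%:R / 2 + T%:R * m i / 2).
  move=> i; rewrite -mulr_sumr; congr (_ * _).
  under eq_bigr => t _ do rewrite gain_pt //.
  rewrite -mulr_suml big_split /= -mulr_sumr sumr_const card_ord.
  rewrite /m /margin /avg_hyp.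
  by field.
rewrite /Mgain exchange_big /=.
under eq_bigr => i _ do rewrite step.
have Pge : forall i, 0 <= P i.
  by move=> i; rewrite /P /unif_on; case: ifP => // _; rewrite invr_ge0.
have -> : T%:R / 2 + T%:R * thetaH / 2 =
    (\sum_(i < n) P i) * (T%:R / 2 + T%:R * thetaH / 2)
    + (1 - \sum_(i < n) P i) * (T%:R / 2 + T%:R * thetaH / 2).
  by ring.
have Hrest : 0 <= (1 - \sum_(i < n) P i) * (T%:R / 2 + T%:R * thetaH / 2).
  have [E|NE] := eqVneq B set0.
    rewrite (I3 E) mulr0 mul0r addr0.
    have -> : \sum_(i < n) P i = 0.
      by apply: big1 => i _; rewrite /P /unif_on E inE.
    by rewrite subr0 mul1r divr_ge0 // ler0n.
  have -> : \sum_(i < n) P i = 1.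
    rewrite (bigID (fun i => i \in B)) /= [X in _ + X]big1; last first.
      by move=> i /negbTE iB; rewrite /P /unif_on iB.
    rewrite addr0 (eq_bigr (fun _ => #|B|%:R^-1)); last first.
      by move=> i iB; rewrite /P /unif_on iB.
    rewrite sumr_const -sum1_card.
    have -> : (\sum_(i in B) 1)%N = #|B| by rewrite sum1_card.
    by rewrite -[X in X = 1]mulr_natr mulVf // pnatr_eq0 cards_eq0.
  by rewrite subrr mul0r.
rewrite -[X in X <= _]addr0; apply: lerD Hrest.
rewrite mulr_suml; apply: ler_sum => i _.
case: (boolP (i \in B)) => iB.
  apply: ler_wpM2l; first exact: Pge.
  rewrite lerD2l ler_pM2r ?invr_gt0 //.
  apply: ler_wpM2l; first by rewrite ler0n.
  exact: I1.
by rewrite /P /unif_on (negbTE iB) !mul0r.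
Qed.
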